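(* Let $\mathbb{F}$ be a field, $\prec$ a term order on the monomials of $\mathbb{F}[x_1,\ldots,x_n]$, $\mathcal{F}\subseteq\mathbb{F}^n$ a finite set, $h\in\mathbb{F}^n\setminus\mathcal{F}$, and $\mathcal{T}:=\mathcal{F}\cup\{h\}$. Let $\{g_1,\ldots,g_s\}$ be the reduced Gröbner basis of $I(\mathcal{F})$ with respect to $\prec$, indexed so that $\mathrm{lm}_\prec(g_1)\prec\cdots\prec\mathrm{lm}_\prec(g_s)$, and let $i:=\min\{j:g_j(h)\ne0\}$. Let $\chi_h:\mathcal{T}\to\mathbb{F}$ be given by $\chi_h(h)=1$ and $\chi_h(f)=0$ for $f\in\mathcal{F}$. Then $\chi_h(t)=\frac{1}{g_i(h)}g_i(t)$ for all $t\in\mathcal{T}$, and $\frac{1}{g_i(h)}g_i$ is a linear combination of monomials in $\mathrm{Sm}(\prec,\mathcal{T})$; i.e. it is the unique expansion of $\chi_h$ as a linear combination of standard monomials of $I(\mathcal{T})$.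
   Context: $I(\mathcal{F})$ is the ideal of polynomials vanishing on $\mathcal{F}$; $\mathrm{Sm}(\prec,\mathcal{T})$ is the set of monomials that are not leading monomials of nonzero elements of $I(\mathcal{T})$. A reduced Gröbner basis is a Gröbner basis whose elements have leading coefficient 1 and none of whose monomials is divisible by the leading monomial of another element. *)

(* Defs.v *)
From HB Require Import structures.
From mathcomp Require Import all_boot all_order all_algebra.
From Stdlib Require Import ClassicalEpsilon.
Set Implicit Arguments. Unset Strict Implicit. Unset Printing Implicit Defensive.
Import Order.TTheory GRing.Theory Num.Theory.
Local Open Scope ring_scope.

Definition mono (n : nat) := n.-tuple nat.
Definition mone (n : nat) : mono n := [tuple 0%N | _ < n].
Definition mmul (n : nat) (a b : mono n) : mono n :=
  [tuple (tnth a i + tnth b i)%N | i < n].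
Definition mdiv (n : nat) (a b : mono n) : bool :=
  [forall i, tnth a i <= tnth b i]%N.

Definition term_order (n : nat) (lt : rel (mono n)) : Prop :=
  [/\ irreflexive lt, transitive lt,
      (forall a b, a != b -> lt a b || lt b a),
      (forall a b c, lt a b -> lt (mmul a c) (mmul b c)) &
      (forall a, a != mone n -> lt (mone n) a)].

Record mpoly (n : nat) (F : fieldType) := MPoly {
  coef : mono n -> F;
  coef_fin : exists s : seq (mono n), forall m, coef m != 0 -> m \in s }.

Definition msupp (n : nat) (F : fieldType) (p : mpoly n F) : seq (mono n) :=
  undup [seq m <- proj1_sig (constructive_indefinite_description _ (coef_fin p))
        | coef p m != 0].

Definition meval (n : nat) (F : fieldType) (p : mpoly n F) (x : 'rV[F]_n) : F :=
  \sum_(m <- msupp p) coef p m * \prod_(i < n) x ord0 i ^+ tnth m i.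

Definition vanishes (n : nat) (F : fieldType) (S : seq 'rV[F]_n) (p : mpoly n F) :=
  forall t, t \in S -> meval p t = 0.

Definition lead_mono (n : nat) (F : fieldType) (lt : rel (mono n))
    (p : mpoly n F) (m : mono n) : Prop :=
  coef p m != 0 /\ forall m', coef p m' != 0 -> m' != m -> lt m' m.

Definition standard_mono (n : nat) (F : fieldType) (lt : rel (mono n))
    (S : seq 'rV[F]_n) (m : mono n) : Prop :=
  forall p : mpoly n F, vanishes S p -> ~ lead_mono lt p m.

Definition groebner (n : nat) (F : fieldType) (lt : rel (mono n))
    (S : seq 'rV[F]_n) (gs : seq (mpoly n F)) : Prop :=
  (forall g, List.In g gs -> vanishes S g) /\
  (forall f : mpoly n F, vanishes S f -> (exists m, coef f m != 0) ->
     exists2 g, List.In g gs &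
       exists mf mg, [/\ lead_mono lt f mf, lead_mono lt g mg & mdiv mg mf]).

(* gs (listed as g_0,...,g_{s-1}) is a reduced Groebner basis of I(S) *)
Definition reduced_groebner (n : nat) (F : fieldType) (lt : rel (mono n))
    (S : seq 'rV[F]_n) (gs : seq (mpoly n F)) : Prop :=
  [/\ groebner lt S gs,
      (forall g, List.In g gs -> exists m, lead_mono lt g m /\ coef g m = 1) &
      (forall j k (z : mpoly n F), (j < size gs)%N -> (k < size gs)%N -> j != k ->
         forall m mk, lead_mono lt (nth z gs k) mk ->
           coef (nth z gs j) m != 0 -> ~~ mdiv mk m)].

(* Main.v *)
Require Import Defs.
From mathcomp Require Import all_boot all_order all_algebra.
From Stdlib Require Import ClassicalEpsilon Classical.
Import GRing.Theory.
Local Open Scope ring_scope.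
Set Implicit Arguments. Unset Strict Implicit.

Definition mon (n : nat) (F : fieldType) (x : 'rV[F]_n) (m : mono n) : F :=
  \prod_(i < n) x ord0 i ^+ tnth m i.

Lemma mem_msupp n F (p : mpoly n F) m : (m \in msupp p) = (coef p m != 0).
Proof.
rewrite /msupp mem_undup mem_filter.
case: (constructive_indefinite_description _ _) => s Hs /=.
by case E: (coef p m != 0) => //=; apply: Hs; rewrite E.
Qed.

Lemma uniq_msupp n F (p : mpoly n F) : uniq (msupp p).
Proof. exact: undup_uniq. Qed.

Lemma meval_seq n F (p : mpoly n F) (s : seq (mono n)) x :
  uniq s -> (forall m, coef p m != 0 -> m \in s) ->
  meval p x = \sum_(m <- s) coef p m * mon x m.
Proof.
move=> us Hs; rewrite /meval.
rewrite [RHS](bigID (fun m => coef p m != 0)) /=.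
rewrite [X in _ = _ + X]big1 ?addr0; last by move=> m /negbNE/eqP->; rewrite mul0r.
rewrite -[in RHS]big_filter /mon.
apply: perm_big; apply: uniq_perm.
- exact: uniq_msupp.
- exact: filter_uniq.
move=> m; rewrite mem_msupp mem_filter; case E: (coef p m != 0) => //=.
by rewrite Hs ?E.
Qed.

Lemma meval0 n F (p : mpoly n F) x : (forall m, coef p m = 0) -> meval p x = 0.
Proof. by move=> H; rewrite /meval big1 // => m _; rewrite H mul0r. Qed.

Lemma lin_supp n (F : fieldType) (a b : F) (p q : mpoly n F) m :
  a * coef p m + b * coef q m != 0 -> (coef p m != 0) || (coef q m != 0).
Proof.
move=> H.
case: (eqVneq (coef p m) 0) => [H1|//]; case: (eqVneq (coef q m) 0) => [H2|]; last by rewrite orbT.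
by move: H; rewrite H1 H2 !mulr0 addr0 eqxx.
Qed.
Lemma lin_fin n (F : fieldType) (a b : F) (p q : mpoly n F) :
  exists s : seq (mono n), forall m, a * coef p m + b * coef q m != 0 -> m \in s.
Proof.
by exists (msupp p ++ msupp q) => m /lin_supp H; rewrite mem_cat !mem_msupp.
Qed.
Definition lin n (F : fieldType) (a b : F) (p q : mpoly n F) : mpoly n F :=
  MPoly (lin_fin a b p q).
Lemma coef_lin n (F : fieldType) (a b : F) (p q : mpoly n F) m :
  coef (lin a b p q) m = a * coef p m + b * coef q m.
Proof. by []. Qed.

Lemma meval_lin n (F : fieldType) (a b : F) (p q : mpoly n F) x :
  meval (lin a b p q) x = a * meval p x + b * meval q x.
Proof.
set s := undup (msupp p ++ msupp q).
have us : uniq s by exact: undup_uniq.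
have Hp : forall m, coef p m != 0 -> m \in s.
  by move=> m H; rewrite mem_undup mem_cat mem_msupp H.
have Hq : forall m, coef q m != 0 -> m \in s.
  by move=> m H; rewrite mem_undup mem_cat (mem_msupp q) H orbT.
have Hl : forall m, coef (lin a b p q) m != 0 -> m \in s.
  by move=> m /lin_supp H; rewrite mem_undup mem_cat !mem_msupp.
rewrite (meval_seq x us Hl) (meval_seq x us Hp) (meval_seq x us Hq).
rewrite !mulr_sumr -big_split /=; apply: eq_bigr => m _.
by rewrite mulrDl !mulrA.
Qed.


Definition msub (n : nat) (a b : mono n) : mono n :=
  [tuple (tnth a i - tnth b i)%N | i < n].

Lemma mmulC n (a b : mono n) : mmul a b = mmul b a.
Proof. by apply: eq_from_tnth => i; rewrite !tnth_mktuple addnC. Qed.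

Lemma mmul1 n (a : mono n) : mmul a (mone n) = a.
Proof. by apply: eq_from_tnth => i; rewrite !tnth_mktuple addn0. Qed.

Lemma msubK n (a b : mono n) : mdiv b a -> mmul (msub a b) b = a.
Proof.
move/forallP => H; apply: eq_from_tnth => i; rewrite !tnth_mktuple subnK //.
Qed.

Lemma mmulK n (a b : mono n) : msub (mmul a b) b = a.
Proof. by apply: eq_from_tnth => i; rewrite !tnth_mktuple addnK. Qed.

Lemma mdiv_mmul n (a b : mono n) : mdiv b (mmul a b).
Proof. by apply/forallP => i; rewrite tnth_mktuple leq_addl. Qed.

Lemma mmul_inj n (c : mono n) : injective (fun a : mono n => mmul a c).
Proof. by move=> a b /= E; rewrite -(mmulK a c) E mmulK. Qed.

Lemma mdiv_le n (lt : rel (mono n)) a b : term_order lt -> mdiv a b -> a = b \/ lt a b.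
Proof.
case=> _ _ _ Hc H1 Hd.
case: (eqVneq (msub b a) (mone n)) => E.
  by left; rewrite -(msubK Hd) E mmulC; apply: esym; apply: mmul1.
right; have := Hc _ _ a (H1 _ E).
by rewrite (msubK Hd) mmulC mmul1.
Qed.

Lemma lead_uniq n (F : fieldType) (lt : rel (mono n)) (p : mpoly n F) m1 m2 :
  term_order lt -> lead_mono lt p m1 -> lead_mono lt p m2 -> m1 = m2.
Proof.
case=> Hi Ht _ _ _ [c1 H1] [c2 H2].
case: (eqVneq m1 m2) => // E.
have a := H2 _ c1 E. have b := H1 _ c2 (ltac:(by rewrite eq_sym)).
by move: (Ht _ _ _ a b); rewrite Hi.
Qed.

Lemma shift_fin n (F : fieldType) (c : mono n) (p : mpoly n F) :
  exists s : seq (mono n), forall m,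
    (if mdiv c m then coef p (msub m c) else 0) != 0 -> m \in s.
Proof.
exists (map (fun a : mono n => mmul a c) (msupp p)) => m.
case D: (mdiv c m) => //; last by rewrite eqxx.
move=> H; apply/mapP; exists (msub m c); first by rewrite mem_msupp.
by rewrite msubK.
Qed.
Definition shift n (F : fieldType) (c : mono n) (p : mpoly n F) : mpoly n F :=
  MPoly (shift_fin c p).
Lemma coef_shift n (F : fieldType) (c : mono n) (p : mpoly n F) m :
  coef (shift c p) m = if mdiv c m then coef p (msub m c) else 0.
Proof. by []. Qed.
Lemma coef_shift_mul n (F : fieldType) (c : mono n) (p : mpoly n F) m :
  coef (shift c p) (mmul m c) = coef p m.
Proof. by rewrite coef_shift mdiv_mmul mmulK. Qed.

Lemma mon_mul n (F : fieldType) (x : 'rV[F]_n) a b : mon x (mmul a b) = mon x a * mon x b.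
Proof.
rewrite /mon -big_split /=; apply: eq_bigr => i _.
by rewrite tnth_mktuple exprD.
Qed.

Lemma meval_shift n (F : fieldType) (c : mono n) (p : mpoly n F) x :
  meval (shift c p) x = mon x c * meval p x.
Proof.
have us : uniq (map (fun a : mono n => mmul a c) (msupp p)).
  by rewrite map_inj_uniq ?uniq_msupp //; apply: mmul_inj.
have Hs : forall m, coef (shift c p) m != 0 -> m \in map (fun a : mono n => mmul a c) (msupp p).
  move=> m; rewrite coef_shift; case D: (mdiv c m); last by rewrite eqxx.
  move=> H; apply/mapP; exists (msub m c); first by rewrite mem_msupp.
  by rewrite msubK.
rewrite (meval_seq x us Hs) big_map (meval_seq x (uniq_msupp p) (fun m H => eq_rect _ _ H _ (esym (mem_msupp p m)))) mulr_sumr.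
apply: eq_bigr => m _; rewrite coef_shift_mul mon_mul.
by rewrite mulrA mulrC.
Qed.

Lemma one_fin n (F : fieldType) :
  exists s : seq (mono n), forall m, (if m == mone n then 1 else 0 : F) != 0 -> m \in s.
Proof. by exists [:: mone n] => m; case: (eqVneq m (mone n)) => [->|_]; rewrite ?mem_seq1 ?eqxx. Qed.
Definition mone_p n (F : fieldType) : mpoly n F := MPoly (@one_fin n F).

Lemma meval_one n (F : fieldType) x : meval (mone_p n F) x = 1.
Proof.
have Hs : forall m, coef (mone_p n F) m != 0 -> m \in [:: mone n].
  by move=> m /=; case: (eqVneq m (mone n)) => [->|_]; rewrite ?mem_seq1 ?eqxx.
rewrite (meval_seq x (isT : uniq [:: mone n]) Hs) big_seq1 /= eqxx mul1r /mon.
by apply: big1 => i _; rewrite tnth_mktuple expr0.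
Qed.

Definition munit n (i : 'I_n) : mono n := [tuple nat_of_bool (j == i) | j < n].

Lemma mon_unit n (F : fieldType) (x : 'rV[F]_n) i : mon x (munit i) = x ord0 i.
Proof.
rewrite /mon (bigD1 i) //= big1 ?mulr1; first by rewrite tnth_mktuple eqxx expr1.
by move=> j /negbTE E; rewrite tnth_mktuple E expr0.
Qed.


Lemma nat_min_after (f : nat -> nat) a :
  exists j, (a < j)%N /\ forall j', (a < j')%N -> (f j <= f j')%N.
Proof.
apply: NNPP => N.
have K : forall v j, (a < j)%N -> (v <= f j)%N.
  elim=> [//|v IH] j Hj.
  rewrite ltn_neqAle IH // andbT.
  apply/negP => /eqP E; apply: N; exists j; split => // j' Hj'.
  by rewrite -E IH.
by have := K (f a.+1).+1 a.+1 (ltnSn a); rewrite ltnn.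
Qed.

Lemma nat_mono_sub (f : nat -> nat) :
  exists phi : nat -> nat, (forall k, phi k < phi k.+1)%N /\
     (forall k, f (phi k) <= f (phi k.+1))%N.
Proof.
pose am a := proj1_sig (constructive_indefinite_description _ (nat_min_after f a)).
have amP a : (a < am a)%N /\ forall j', (a < j')%N -> (f (am a) <= f j')%N.
  exact: (proj2_sig (constructive_indefinite_description _ (nat_min_after f a))).
pose phi := fix phi k := if k is k'.+1 then am (phi k') else am 0.
have inc : forall k, (phi k < phi k.+1)%N by move=> k; exact: (amP _).1.
have minP : forall k j, (phi k < j)%N -> (f (phi k) <= f j)%N.
  case=> [|k] j Hj /=; apply: (amP _).2.
    by apply: leq_ltn_trans Hj.
  by apply: ltn_trans Hj; apply: inc.
by exists phi; split => // k; apply: minP.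
Qed.

Lemma incr_mono (phi : nat -> nat) : (forall k, phi k < phi k.+1)%N ->
  forall a b, (a < b)%N -> (phi a < phi b)%N.
Proof.
move=> H a; elim=> [//|b IH]; rewrite ltnS leq_eqVlt => /orP [/eqP->|/IH h] //.
exact: ltn_trans h (H b).
Qed.

Lemma chain_mono (g : nat -> nat) : (forall k, g k <= g k.+1)%N ->
  forall a b, (a <= b)%N -> (g a <= g b)%N.
Proof.
move=> H a; elim=> [|b IH]; first by rewrite leqn0 => /eqP->.
rewrite leq_eqVlt => /orP [/eqP->|h] //.
exact: leq_trans (IH h) (H b).
Qed.

Lemma dickson_d n (f : nat -> mono n) d :
  exists phi : nat -> nat, (forall k, phi k < phi k.+1)%N /\
    forall i : 'I_n, (i < d)%N -> forall k, (tnth (f (phi k)) i <= tnth (f (phi k.+1)) i)%N.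
Proof.
elim: d => [|d [phi [inc H]]].
  by exists id; split.
case: (ltnP d n) => dn; last first.
  exists phi; split => // i; rewrite ltnS leq_eqVlt => /orP [/eqP E|/H //].
  by move: (ltn_ord i); rewrite E ltnNge dn.
pose i0 := Ordinal dn.
have [psi [pinc pH]] := nat_mono_sub (fun k => tnth (f (phi k)) i0).
exists (fun k => phi (psi k)); split.
  by move=> k; apply: incr_mono => //.
move=> i; rewrite ltnS leq_eqVlt => /orP [/eqP E|Hi] k.
  by have -> : i = i0 by apply: val_inj.
apply: (chain_mono (g := fun k => tnth (f (phi k)) i)); first by move=> k'; apply: H.
exact: ltnW (pinc k).
Qed.

Lemma dickson n (f : nat -> mono n) : exists i j, (i < j)%N /\ mdiv (f i) (f j).
Proof.
have [phi [inc H]] := dickson_d f n.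
exists (phi 0), (phi 1); split; first exact: inc.
by apply/forallP => i; apply: H.
Qed.

Lemma lt_wf_ind n (lt : rel (mono n)) (P : mono n -> Prop) :
  term_order lt -> (forall m, (forall m', lt m' m -> P m') -> P m) -> forall m, P m.
Proof.
move=> To IH m0; apply: NNPP => N0.
have step : forall m : {m | ~ P m}, {m' : {m | ~ P m} | lt (proj1_sig m') (proj1_sig m)}.
  move=> [m Nm]; apply: constructive_indefinite_description.
  apply: NNPP => K; apply: (Nm); apply: IH => m' Hm'; apply: NNPP => Nm'.
  by apply: K; exists (exist _ m' Nm').
pose s := fix s k := if k is k'.+1 then proj1_sig (step (s k')) else exist _ m0 N0.
pose g k := proj1_sig (s k).
have dec : forall k, lt (g k.+1) (g k) by move=> k; exact: (proj2_sig (step (s k))).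
case: To => Hi Ht Htot Hc H1.
have decm : forall a b, (a < b)%N -> lt (g b) (g a).
  move=> a; elim=> [//|b IHb]; rewrite ltnS leq_eqVlt => /orP [/eqP->|/IHb h] //.
  exact: Ht h.
have [i [j [ij D]]] := dickson g.
have := decm _ _ ij.
case: (mdiv_le (And5 Hi Ht Htot Hc H1) D) => [->|h]; first by rewrite Hi.
by move=> h'; move: (Ht _ _ _ h h'); rewrite Hi.
Qed.


Lemma all0_or n (F : fieldType) (p : mpoly n F) :
  (forall m, coef p m = 0) \/ exists m, coef p m != 0.
Proof.
case: (classic (exists m, coef p m != 0)) => H; [by right|left] => m.
by apply/eqP; apply: NNPP => K; apply: H; exists m; apply/negP.
Qed.

Lemma seq_max n (lt : rel (mono n)) (s : seq (mono n)) : term_order lt -> s != [::] ->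
  exists2 m, m \in s & forall m', m' \in s -> m' != m -> lt m' m.
Proof.
case=> Hi Ht Htot _ _; elim: s => [//|a s IH] _.
case: (eqVneq s [::]) => [->|/IH [m ms Hm]].
  by exists a; rewrite ?mem_seq1 // => m'; rewrite mem_seq1 => /eqP->; rewrite eqxx.
case: (eqVneq a m) => [E|Nam].
  exists m; first by rewrite in_cons ms orbT.
  by move=> m'; rewrite in_cons -E => /orP [/eqP->|]; [rewrite eqxx| rewrite E; apply: Hm].
case/orP: (Htot _ _ Nam) => L.
  exists m; first by rewrite in_cons ms orbT.
  by move=> m'; rewrite in_cons => /orP [/eqP->|] //; apply: Hm.
exists a; first by rewrite in_cons eqxx.
move=> m'; rewrite in_cons => /orP [/eqP->|]; first by rewrite eqxx.
move=> m's Nm'a; case: (eqVneq m' m) => [->//|Nm'm].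
exact: Ht (Hm _ m's Nm'm) L.
Qed.

Lemma exists_lead n (F : fieldType) (lt : rel (mono n)) (p : mpoly n F) :
  term_order lt -> (exists m, coef p m != 0) -> exists m, lead_mono lt p m.
Proof.
move=> To [m0 H0].
have : msupp p != [::].
  by apply/eqP => E; move: (mem_msupp p m0); rewrite E in_nil H0.
case/(seq_max To) => m; rewrite mem_msupp => Hm H.
by exists m; split => // m'; rewrite -mem_msupp; apply: H.
Qed.

Lemma In_nth (T : Type) (z : T) (s : seq T) x : List.In x s ->
  exists2 k, (k < size s)%N & nth z s k = x.
Proof.
elim: s => [//|a s IH] /= [->|/IH [k ks E]]; first by exists 0%N.
by exists k.+1.
Qed.

Lemma nth_In (T : Type) (z : T) (s : seq T) k : (k < size s)%N -> List.In (nth z s k) s.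
Proof.
elim: s k => [//|a s IH] [|k] /=; first by left.
by rewrite ltnS => /IH; right.
Qed.

Lemma claim (F : fieldType) n (lt : rel (mono n)) (Fs : seq 'rV[F]_n)
   (gs : seq (mpoly n F)) (h : 'rV[F]_n) (z : mpoly n F) :
  term_order lt -> groebner lt Fs gs -> forall mf f,
  vanishes Fs f -> lead_mono lt f mf ->
  (forall k mk, (k < size gs)%N -> lead_mono lt (nth z gs k) mk ->
      (mk = mf \/ lt mk mf) -> meval (nth z gs k) h = 0) ->
  meval f h = 0.
Proof.
move=> To [G1 G2].
have To' := To; case: To' => Hi Ht Htot Hc H1.
apply: (lt_wf_ind (P := fun mf => forall f : mpoly n F, vanishes Fs f -> lead_mono lt f mf ->
  (forall k mk, (k < size gs)%N -> lead_mono lt (nth z gs k) mk ->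
      (mk = mf \/ lt mk mf) -> meval (nth z gs k) h = 0) ->
  meval f h = 0) To) => mf IH f Vf Lf Hq.
have [g Ing [mf' [mg [Lf' Lg Dv]]]] := G2 f Vf (ex_intro _ mf Lf.1).
have E := lead_uniq To Lf' Lf; subst mf'.
have [k ks Ek] := In_nth z Ing.
have gh : meval g h = 0.
  by rewrite -Ek; apply: (Hq k mg ks); [rewrite Ek | apply: mdiv_le].
set a := coef f mf / coef g mg.
set c := msub mf mg.
set f' := lin 1 (- a) f (shift c g).
have emf : mf = mmul mg c by rewrite mmulC msubK.
have Vf' : vanishes Fs f'.
  move=> t tF; rewrite meval_lin meval_shift (Vf t tF) (G1 g Ing t tF).
  by rewrite !mulr0 addr0.
have ef : meval f' h = meval f h by rewrite meval_lin meval_shift gh !mulr0 addr0 mul1r.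
have supp : forall m, coef f' m != 0 -> lt m mf.
  move=> m Hm; case: (eqVneq m mf) => [Emf|Nm].
    move: Hm; rewrite Emf coef_lin {2}emf coef_shift_mul mul1r /a mulNr divfK ?subrr ?eqxx //.
    exact: Lg.1.
  case/orP: (lin_supp Hm) => [Hf|].
    exact: Lf.2.
  rewrite coef_shift; case D: (mdiv c m); last by rewrite eqxx.
  move=> Hg; have em : m = mmul (msub m c) c by rewrite msubK.
  case: (eqVneq (msub m c) mg) => [E'|N'].
    by move: Nm; rewrite em E' -emf eqxx.
  by rewrite em emf; apply: Hc; apply: Lg.2.
case: (all0_or f') => [Z|NZ].
  by rewrite -ef; apply: meval0.
have [mr Lr] := exists_lead To NZ.
have lr := supp _ Lr.1.
rewrite -ef; apply: (IH mr lr f' Vf' Lr) => k' mk' k's Lk' D.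
apply: (Hq k' mk' k's Lk'); right.
by case: D => [->//|D]; apply: Ht D lr.
Qed.

Lemma sep_poly (F : fieldType) n (Fs : seq 'rV[F]_n) h :
  h \notin Fs -> exists P : mpoly n F, vanishes Fs P /\ meval P h != 0.
Proof.
elim: Fs => [|t Fs IH].
  by move=> _; exists (mone_p n F); split; [by [] | rewrite meval_one oner_eq0].
rewrite in_cons negb_or => /andP [Nht /IH [P [VP HP]]].
have [i Hi] : exists i, t ord0 i != h ord0 i.
  apply: NNPP => K; move: Nht; rewrite eq_sym; suff -> : t = h by rewrite eqxx.
  apply/rowP => j; apply/eqP; apply: NNPP => K'; apply: K; exists j; apply/negP.
  exact K'.
exists (lin 1 (- t ord0 i) (shift (munit i) P) P).
have ev : forall x, meval (lin 1 (- t ord0 i) (shift (munit i) P) P) x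
                 = (x ord0 i - t ord0 i) * meval P x.
  by move=> x; rewrite meval_lin meval_shift mon_unit mul1r mulNr -mulrBl.
split.
  move=> s; rewrite in_cons => /orP [/eqP->|sF]; rewrite ev.
    by rewrite subrr mul0r.
  by rewrite (VP s sF) mulr0.
by rewrite ev mulf_neq0 // subr_eq0 eq_sym.
Qed.

Unset Implicit Arguments. Set Strict Implicit.

Theorem mainTheorem5 (F : fieldType) (n : nat) (lt : rel (mono n))
  (Fs : seq 'rV[F]_n) (h : 'rV[F]_n) (gs : seq (mpoly n F)) (z : mpoly n F) :
  term_order lt ->
  h \notin Fs ->
  reduced_groebner lt Fs gs ->
  (* indexing: lm(g_0) < lm(g_1) < ... *)
  (forall j k mj mk, (j < k)%N -> (k < size gs)%N ->
     lead_mono lt (nth z gs j) mj -> lead_mono lt (nth z gs k) mk -> lt mj mk) ->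
  let T := h :: Fs in
  let chi := fun t : 'rV[F]_n => if t == h then 1 else 0 : F in
  exists i : nat,
    [/\ [/\ (i < size gs)%N,
        meval (nth z gs i) h != 0 &
        (forall j, (j < i)%N -> meval (nth z gs j) h = 0)],
        (forall t, t \in T -> (meval (nth z gs i) h)^-1 * meval (nth z gs i) t = chi t),
        (forall m, coef (nth z gs i) m != 0 -> standard_mono lt T m) &
        forall p : mpoly n F,
           (forall m, coef p m != 0 -> standard_mono lt T m) ->
           (forall t, t \in T -> meval p t = chi t) ->
           forall m, coef p m = (meval (nth z gs i) h)^-1 * coef (nth z gs i) m].
Proof.
move=> To hn [G Monic Red] Ord T chi.
have To' := To; case: To' => Hi Ht Htot Hc H1.
set pr := fun g : mpoly n F => meval g h != 0.
set i := find pr gs.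
have before : forall j, (j < i)%N -> meval (nth z gs j) h = 0.
  by move=> j ji; have := before_find z ji; rewrite /pr => /negbFE/eqP.
have hasg : has pr gs.
  apply: NNPP => /negP N.
  have [P [VP HP]] := sep_poly hn.
  have NZ : exists m, coef P m != 0.
    case: (all0_or P) => // Z; by move: HP; rewrite meval0 ?eqxx.
  have [mP LP] := exists_lead To NZ.
  move: HP; rewrite (claim (h := h) (z := z) To G VP LP) ?eqxx // => k mk ks _ _.
  by apply: before; rewrite /i (hasNfind N).
have isz : (i < size gs)%N by rewrite -has_find.
have gih : meval (nth z gs i) h != 0 by apply: (nth_find z hasg).
set gi := nth z gs i; set ci := meval gi h.
have Vi : vanishes Fs gi by apply: G.1; apply: nth_In.
have P2 : forall t, t \in T -> ci^-1 * meval gi t = chi t.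
  move=> t; rewrite /T in_cons /chi => /orP [/eqP->|tF]; first by rewrite eqxx mulVf.
  have -> : (t == h) = false by apply/negbTE; apply: contraNneq hn => <-.
  by rewrite (Vi t tF) mulr0.
have [mi [Lgi Cgi]] := Monic gi (nth_In z isz).
have P3 : forall m, coef gi m != 0 -> standard_mono lt T m.
  move=> m Hm q Vq Lq.
  have Vq' : vanishes Fs q by move=> t tF; apply: Vq; rewrite /T in_cons tF orbT.
  have [g Ing [mq [mg [Lq' Lg Dv]]]] := G.2 q Vq' (ex_intro _ m Lq.1).
  have E := lead_uniq To Lq' Lq; subst mq.
  have [k ks Ek] := In_nth z Ing.
  case: (eqVneq i k) => [Eik|Nik]; last first.
    by move: Dv; rewrite -Ek in Lg; rewrite (negbTE (Red i k z isz ks Nik m mg Lg Hm)).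
  subst k; rewrite -/gi in Ek; subst g.
  have E := lead_uniq To Lg Lgi; subst mg.
  case: (eqVneq m mi) => [Emi|Nmi]; last first.
    have lmi := Lgi.2 _ Hm Nmi.
    case: (mdiv_le To Dv) => [Em|lim]; first by move: Nmi; rewrite Em eqxx.
    by move: (Ht _ _ _ lim lmi); rewrite Hi.
  subst m.
  set cq := coef q mi.
  set r := lin 1 (- cq) q gi.
  have Vr : vanishes Fs r.
    by move=> t tF; rewrite meval_lin (Vq' t tF) (Vi t tF) !mulr0 addr0.
  have rh : meval r h != 0.
    rewrite meval_lin (Vq h) ?mem_head // mulr0 add0r mulNr oppr_eq0 mulf_neq0 //.
    exact: Lq.1.
  have NZ : exists m, coef r m != 0.
    case: (all0_or r) => // Z; by move: rh; rewrite meval0 ?eqxx.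
  have [mr Lr] := exists_lead To NZ.
  have lr : lt mr mi.
    have Hr := Lr.1; case: (eqVneq mr mi) => [Emr|Nmr].
      by move: Hr; rewrite Emr coef_lin Cgi mulr1 mul1r subrr eqxx.
    case/orP: (lin_supp Hr) => H.
      exact: Lq.2.
    exact: Lgi.2.
  move: rh; rewrite (claim (h := h) (z := z) To G Vr Lr) ?eqxx // => k mk ks2 Lk D.
  have lk : lt mk mi by case: D => [->//|D]; apply: Ht D lr.
  apply: before; case: (ltngtP k i) => // [ik|ik].
    by move: (Ht _ _ _ (Ord _ _ _ _ ik ks2 Lgi Lk) lk); rewrite Hi.
  by subst k; rewrite -/gi in Lk; rewrite (lead_uniq To Lk Lgi) Hi in lk.
exists i; split => //.
move=> p Hp Hint m.
set r := lin 1 (- ci^-1) p gi.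
have Vr : vanishes T r.
  by move=> t tT; rewrite meval_lin (Hint t tT) -(P2 t tT) mul1r mulNr subrr.
case: (all0_or r) => [Z|NZ]; last first.
  have [mr Lr] := exists_lead To NZ.
  case/orP: (lin_supp Lr.1) => H.
    by case: (Hp _ H r Vr Lr).
  by case: (P3 _ H r Vr Lr).
by apply/eqP; rewrite -subr_eq0; have := Z m; rewrite coef_lin mul1r mulNr => ->.
Qed.
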